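(* Let $k$ and $r$ be positive integers such that $r \mid k$ and $k > r$. Then $$S_{\mathfrak{z},2}(k;r) = rk - 2r + 1.$$
   Context: Let $\mathcal{E}$ denote the equation $x_1 + x_2 + \cdots + x_{k-1} = x_k$, whose solutions are taken in positive integers. For positive integers $k, r$ with $r \mid k$, $S_{\mathfrak{z},2}(k;r)$ is defined as the least positive integer $t$ such that for every 2-coloring $\chi : \{1, 2, \ldots, t\} \to \{0,1\}$ there exists a solution $(\hat{x}_1, \ldots, \hat{x}_k)$ of $\mathcal{E}$ with all $\hat{x}_i \in \{1, \ldots, t\}$ satisfying $\sum_{i=1}^k \chi(\hat{x}_i) \equiv 0 \pmod r$. *)

(* Defs.v *)
From mathcomp Require Import all_boot.
Set Implicit Arguments. Unset Strict Implicit. Unset Printing Implicit Defensive.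

(* A solution of E : x_1 + ... + x_{k-1} = x_k in positive integers, all in
   {1,..,t}.  Indices are shifted: x 0, ..., x (k-1) stand for x_1..x_k. *)
Definition sol_in (k t : nat) (x : nat -> nat) : Prop :=
  (forall i, i < k -> 1 <= x i <= t) /\
  \sum_(i < k.-1) x i = x k.-1.

(* Every 2-colouring of {1,..,t} admits a solution whose colour sum is
   divisible by r.  (Colourings are given as nat -> bool; only values on
   {1,..,t} matter.) *)
Definition zs_prop (k r t : nat) : Prop :=
  forall chi : nat -> bool,
    exists x : nat -> nat, sol_in k t x /\ r %| \sum_(i < k) (chi (x i) : nat).

Definition is_S_z2 (k r s : nat) : Prop :=
  0 < s /\ zs_prop k r s /\ (forall t, 0 < t -> zs_prop k r t -> s <= t).

(* Main.v *)
Require Import Defs.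
From mathcomp Require Import all_boot zify.


Lemma sum_nth (F : nat -> nat) s : \sum_(i < size s) F (nth 0 s i) = sumn (map F s).
Proof. elim: s => [|a s IH]; first by rewrite big_ord0. by rewrite big_ord_recl /= IH. Qed.

Lemma elem_le_sumn s i : i < size s -> nth 0 s i <= sumn s.
Proof.
elim: s i => [|a s IH] [|i] //= H; first exact: leq_addr.
exact: leq_trans (IH i H) (leq_addl _ _).
Qed.

Lemma size_le_sumn s : all (fun v => 0 < v) s -> size s <= sumn s.
Proof. elim: s => [|a s IH] //= /andP [Ha Hs]. have := IH Hs. lia. Qed.

Lemma mk_sol k t s (chi : nat -> bool) : 1 < k -> size s = k.-1 -> all (fun v => 0 < v) s ->
  sumn s <= t ->
  exists x, sol_in k t x /\
    \sum_(i < k) (chi (x i) : nat) = sumn (map (fun v => nat_of_bool (chi v)) s) + chi (sumn s).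
Proof.
move=> Hk Hs Hpos Ht.
have Hk' : k = (size s).+1 by lia.
exists (fun i => nth 0 (rcons s (sumn s)) i); split; [split|].
- move=> i Hi; rewrite nth_rcons.
  case: (ltnP i (size s)) => H1.
    have := @elem_le_sumn s i H1. have := allP Hpos _ (mem_nth 0 H1). move=> /= P1 P2. lia.
  case: (i =P size s) => H2; last lia.
  have := @size_le_sumn s Hpos. lia.
- rewrite -Hs. under eq_bigr do rewrite nth_rcons ltn_ord.
  by rewrite (sum_nth (fun v => v)) map_id nth_rcons ltnn eqxx.
- rewrite Hk' big_ord_recr /=. under eq_bigr do rewrite nth_rcons ltn_ord.
  by rewrite (sum_nth (fun v => nat_of_bool (chi v))) nth_rcons ltnn eqxx.
Qed.
Lemma lower k r t : 0 < r -> r %| k -> 0 < k -> t <= r * k - 2 * r -> ~ zs_prop k r t.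
Proof.
move=> Hr Hrk Hk Ht H.
have [x [[Hb Hsum] Hd]] := H (fun v => v <= k - 2).
set a := \sum_(i < k.-1) ((k - 2 < x i) : nat).
have E1 : \sum_(i < k.-1) ((x i <= k - 2) : nat) + a = k.-1.
  rewrite /a -big_split /=.
  rewrite (eq_bigr (fun _ => 1)); last by move=> i _; case: leqP.
  by rewrite sum_nat_const card_ord muln1.
have E2 : k.-1 + a * (k - 2) <= \sum_(i < k.-1) x i.
  have -> : k.-1 + a * (k - 2) = \sum_(i < k.-1) (1 + ((k - 2 < x i) : nat) * (k - 2)).
    by rewrite big_split /= sum_nat_const card_ord muln1 /a big_distrl.
  apply: leq_sum => i _.
  have : i < k by have := ltn_ord i; lia.
  move/Hb. case: leqP => /=; lia.
have Hlast : k.-1 < k by lia.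
have Bl := Hb _ Hlast.
have Ek : k = k.-1.+1 by lia.
move: Hd; rewrite Ek big_ord_recr /= -Ek.
have Hxl : k.-1 <= x k.-1 by rewrite -Hsum; apply: leq_trans E2; apply: leq_addr.
have -> : (x k.-1 <= k - 2) = false by apply/negbTE; rewrite -ltnNge; lia.
rewrite addn0 => Hd.
have Hd' : r %| a.+1.
  have Hk2 : k = \sum_(i < k.-1) ((x i <= k - 2) : nat) + a.+1 by lia.
  by move: Hrk; rewrite Hk2 (dvdn_addr _ Hd).
have := dvdn_leq (ltn0Sn a) Hd'.
move=> Hra.
have : r * (k - 2) <= a.+1 * (k - 2) by apply: leq_mul.
rewrite mulSn mulnBr.
have Hx2 : k.-1 + a * (k - 2) <= x k.-1 by rewrite -Hsum.
move: Hx2 Bl Ht. generalize (a * (k - 2)) => b.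
case: (leqP k 1) => Hk1.
  have -> : k = 1 by lia.
  rewrite muln1. lia.
lia.
Qed.

Lemma use_sol k t r (chi : nat -> bool) s L : 1 < k -> size s = k.-1 -> all (fun v => 0 < v) s ->
  sumn s = L -> L <= t ->
  r %| sumn (map (fun v => nat_of_bool (chi v)) s) + chi L ->
  exists x, sol_in k t x /\ r %| \sum_(i < k) (chi (x i) : nat).
Proof.
move=> Hk Hs Hp HL Ht Hd.
have [x [Hx Hc]] := @mk_sol k t s chi Hk Hs Hp (ltac:(by rewrite HL)).
by exists x; split => //; rewrite Hc HL.
Qed.
Lemma find_z (c : nat -> bool) n : 2 <= n -> c 2 = true -> c n = false ->
  exists z, 2 < z <= n /\ c z.-1 = true /\ c z = false.
Proof.
elim: n => [|n IH] // Hn H2 Hcn.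
have Hn2 : 2 <= n.
  case: (leqP 2 n) => // Hlt. have Hn1 : n.+1 = 2 by lia.
  by rewrite Hn1 H2 in Hcn.
case Hc: (c n).
- exists n.+1; split; [lia | by split].
- have [z [Hz [Hz1 Hz2]]] := IH Hn2 H2 Hc. exists z. split => //; lia.
Qed.

Lemma dvd_eq r n m : r %| n -> n = m -> r %| m.
Proof. by move=> H <-. Qed.
Arguments dvd_eq {r n m}.

Ltac nodvd := match goal with |- is_true (_ %| _) => fail 1 | _ => lia end.
Ltac fin := rewrite ?map_cat ?map_nseq ?size_cat ?size_nseq ?all_cat ?all_nseq ?sumn_cat ?sumn_nseq /=.

Lemma upper_main k r q (chi : nat -> bool) : 2 <= r -> 2 <= q -> k = q * r -> chi 1 = true ->
  exists x, sol_in k (r * k - 2 * r + 1) x /\ r %| \sum_(i < k) (chi (x i) : nat).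
Proof.
move=> Hr Hq Hkq H1.
have Hdk : r %| k by rewrite Hkq dvdn_mull.
have Hdkr : r %| k - r by apply: dvdn_sub.
have Hk2 : 2 * r <= k by rewrite Hkq leq_mul2r; lia.
have HN : r * k - 2 * r + 1 = (r - 1) * (k - 2) + k - 1.
  have E : r * k = (r - 1) * (k - 2) + 2 * r + k - 2.
    have [a Ha] : exists a, r = a.+1 by exists r.-1; lia.
    have [b Hb] : exists b, k = b.+2 by exists k.-2; lia.
    rewrite Ha Hb !subSS !subn0 mulSn !mulnS. lia.
  lia.
rewrite HN.
have HP0 : 0 <= (r - 1) * (k - 2) by [].
clear HN.
case Hk1: (chi k.-1).
  apply: (@use_sol _ _ _ _ (nseq k.-1 1) (k.-1)); fin; try nodvd.
  try (rewrite ?H1 ?Hk1 /=; apply: (dvd_eq Hdk); lia).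
case H2: (chi 2).
  have [z [Hz [Hz1 Hz2]]] := @find_z chi k.-1 ltac:(lia) H2 Hk1.
  have Hzb : (r - 1) * z.-1 <= (r - 1) * (k - 2) by apply: leq_mul => //; lia.
  case HL: (chi (k.-1 + (r - 1) * z.-1)).
  + apply: (@use_sol _ _ _ _ (nseq (r - 1) z.-1 ++ nseq (r - 1) 2 ++ nseq (k - 2 * r + 1) 1) (k.-1 + (r - 1) * z.-1)); fin; try nodvd.
    try (rewrite ?Hz1 ?H2 ?H1 ?HL /=; apply: (dvd_eq Hdk); lia).
  + apply: (@use_sol _ _ _ _ (nseq (r - 1) z ++ nseq (k - r) 1) (k.-1 + (r - 1) * z.-1)); fin; try nodvd.
    try (rewrite ?Hz2 ?H1 ?HL /=; apply: (dvd_eq Hdkr); lia).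
have Hb2 : (r - 1) * 2 <= (r - 1) * (k - 2) by apply: leq_mul => //; lia.
case H3: (chi 3).
- case Ho: (odd r).
  + have Hh : r = 2 * r./2 + 1 by move: (odd_double_half r); rewrite Ho -muln2; lia.
    case HX: (chi (k + r - 2)).
    * apply: (@use_sol _ _ _ _ (nseq r./2 3 ++ nseq (k - 1 - r./2) 1) (k + r - 2)); fin; try nodvd.
      try (rewrite ?H3 ?H1 ?HX /=; apply: (dvd_eq Hdk); lia).
    * apply: (@use_sol _ _ _ _ (nseq (r - 1) 2 ++ nseq (k - r) 1) (k + r - 2)); fin; try nodvd.
      try (rewrite ?H2 ?H1 ?HX /=; apply: (dvd_eq Hdkr); lia).
  + have Hh : r = 2 * r./2 by move: (odd_double_half r); rewrite Ho -muln2; lia.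
    case: (leqP r 2) => Hr2.
    * have Er : r = 2 by lia.
      have Ek : k = 2 * q by rewrite Hkq Er mulnC.
      have HN2 : (r - 1) * (k - 2) + k - 1 = 2 * k - 3 by rewrite Er; lia.
      rewrite HN2.
      case HX: (chi (2 * k - 3)).
      -- apply: (@use_sol _ _ _ _ (nseq (q - 1) 3 ++ nseq q 1) (2 * k - 3)); fin; try nodvd.
         try (rewrite ?H3 ?H1 ?HX /=; apply: (dvd_eq Hdk); lia).
      -- apply: (@use_sol _ _ _ _ (nseq 1 k.-1 ++ nseq (k - 2) 1) (2 * k - 3)); fin; try nodvd.
         try (rewrite ?Hk1 ?H1 ?HX /=; apply: (dvd_eq Hdkr); lia).
    * have Hb3 : 3 * (k - 2) <= (r - 1) * (k - 2) by apply: leq_mul => //; lia.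
      case He: (chi (k + r - 2)); last first.
        apply: (@use_sol _ _ _ _ (nseq (r - 1) 2 ++ nseq (k - r) 1) (k + r - 2)); fin; try nodvd.
        try (rewrite ?H2 ?H1 ?He /=; apply: (dvd_eq Hdkr); lia).
      have Ekh : k = 2 * (q * r./2) by rewrite Hkq {1}Hh; lia.
      case HY: (chi (2 * k + 2 * r - 5)).
      -- apply: (@use_sol _ _ _ _ (nseq (q * r./2 + r - 2) 3 ++ nseq (k - 1 - (q * r./2 + r - 2)) 1) (2 * k + 2 * r - 5)); fin; try nodvd.
         try (rewrite ?H3 ?H1 ?HY /=; apply: (dvd_eq Hdk); lia).
      -- apply: (@use_sol _ _ _ _ (nseq (r - 1) 2 ++ nseq 1 (k + r - 2) ++ nseq (k - r - 1) 1) (2 * k + 2 * r - 5)); fin; try nodvd.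
         try (rewrite ?H2 ?He ?H1 ?HY /=; apply: (dvd_eq Hdkr); lia).
- case HX: (chi (k + r - 1)).
  + apply: (@use_sol _ _ _ _ (nseq r 2 ++ nseq (k - 1 - r) 1) (k + r - 1)); fin; try nodvd.
    try (rewrite ?H2 ?H1 ?HX /=; apply: (dvd_eq Hdkr); lia).
  + apply: (@use_sol _ _ _ _ (nseq (r - 2) 2 ++ nseq 1 3 ++ nseq (k - r) 1) (k + r - 1)); fin; try nodvd.
    try (rewrite ?H2 ?H3 ?H1 ?HX /=; apply: (dvd_eq Hdkr); lia).
Qed.

Lemma neg_sum k (chi : nat -> bool) (x : nat -> nat) :
  \sum_(i < k) (chi (x i) : nat) + \sum_(i < k) ((~~ chi (x i)) : nat) = k.
Proof.
rewrite -big_split /= (eq_bigr (fun _ => 1)); last by move=> i _; case: (chi (x i)).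
by rewrite sum_nat_const card_ord muln1.
Qed.

Theorem theorem3 (k r : nat) (hk : 0 < k) (hr : 0 < r) (hrk : r %| k) (hlt : r < k) :
  is_S_z2 k r (r * k - 2 * r + 1).
Proof.
split; first lia.
split.
- move=> chi.
  case: (leqP r 1) => Hr1.
    have Er : r = 1 by lia.
    apply: (@use_sol _ _ _ _ (nseq k.-1 1) (k.-1)); fin; try lia.
  have Hkq : k = (k %/ r) * r by rewrite divnK.
  have Hq : 2 <= k %/ r.
    case: (leqP 2 (k %/ r)) => // Hq1.
    have : k %/ r * r <= 1 * r by rewrite leq_mul2r; lia.
    lia.
  case H1: (chi 1).
    exact: (@upper_main k r (k %/ r) chi Hr1 Hq Hkq H1).
  have [x [Hx Hd]] := @upper_main k r (k %/ r) (fun v => ~~ chi v) Hr1 Hq Hkq ltac:(by rewrite /= H1).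
  exists x; split => //.
  have E := neg_sum k chi x.
  have -> : \sum_(i < k) (chi (x i) : nat) = k - \sum_(i < k) ((~~ chi (x i)) : nat) by lia.
  exact: dvdn_sub.
- move=> t Ht Hz. rewrite leqNgt; apply/negP => Hlt.
  apply: (@lower k r t hr hrk hk _ Hz). lia.
Qed.
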